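(* Let $n\ge1$ and $s\in D^n$. Then $\sum_{i=1}^{n}L_i\le\sum_{i=1}^{n}\left\lfloor\frac{i+1}{2}\right\rfloor$.
   Context: Let $D$ be a commutative integral domain with $1\neq 0$. For $s=(s_1,\dots,s_n)\in D^n$, a polynomial $f\in D[x]$ annihilates $s$ if $f=0$, or $d=\deg f\ge0$ and $\sum_{k=0}^{d}f_ks_{j-d+k}=0$ for all $d+1\le j\le n$. The linear complexity $L(s)$ is the least degree of a nonzero annihilator of $s$, and $L_i=L(s_1,\dots,s_i)$. *)

(* Defs.v *)
From mathcomp Require Import all_boot all_order all_algebra.
From Stdlib Require Import ClassicalEpsilon.
Set Implicit Arguments. Unset Strict Implicit. Unset Printing Implicit Defensive.
Import GRing.Theory.
Local Open Scope ring_scope.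

(* A sequence s = (s_1,...,s_n) in D^n is a seq D of size n;
   s_i (1-indexed) is nth 0 s (i-1). *)
Definition sterm (D : idomainType) (s : seq D) (i : nat) : D := nth 0 s i.-1.

Definition annihilates (D : idomainType) (f : {poly D}) (s : seq D) : Prop :=
  f = 0 \/
  (forall j : nat, ((size f).-1 + 1 <= j <= size s)%N ->
     \sum_(k < size f) f`_k * sterm s (j - (size f).-1 + k)%N = 0).

Definition has_annihilator_of_deg (D : idomainType) (s : seq D) (d : nat) : bool :=
  if excluded_middle_informative
       (exists f : {poly D}, [/\ f != 0, (size f).-1 = d & annihilates f s])
  then true else false.

Lemma annihilator_exists (D : idomainType) (s : seq D) :
  exists d : nat, has_annihilator_of_deg s d.
Proof.
exists (size s); rewrite /has_annihilator_of_deg.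
case: excluded_middle_informative => // [[]].
exists ('X^(size s)); split.
- by rewrite monic_neq0 // monicXn.
- by rewrite size_polyXn.
- right=> j; rewrite size_polyXn /= addn1 => /andP [h1 h2].
  by have := leq_trans h1 h2; rewrite ltnn.
Qed.

Definition linear_complexity (D : idomainType) (s : seq D) : nat :=
  ex_minn (annihilator_exists s).

(* Main.v *)
Require Import Defs.
From mathcomp Require Import all_boot all_order all_algebra.
From Stdlib Require Import Lia ClassicalEpsilon.
From Stdlib Require ZArith.
From Stdlib Require Import BinNums BinInt.
Delimit Scope nat_scope with N.
Set Implicit Arguments. Unset Strict Implicit. Unset Printing Implicit Defensive.
Import GRing.Theory.
Local Open Scope ring_scope.

Ltac tonat := repeat match goal with
 | H : is_true (_ <= _)%N |- _ => move/leP: H => H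
 | H : is_true (_ < _)%N |- _ => move/ltP: H => H
 | H : is_true (_ == _)%N |- _ => move/eqP: H => H
 | |- is_true (_ <= _)%N => apply/leP
 | |- is_true (_ < _)%N => apply/ltP
 | |- is_true (_ == _)%N => apply/eqP
 end; unfold subn, subn_rec, addn, addn_rec, muln, muln_rec in *.
Ltac slia := tonat; lia.

Definition Ew (D : idomainType) (s : seq D) (p : {poly D}) (N r : nat) : D :=
  \sum_(k < N) p`_k * sterm s (r + k).

Definition LC (D : idomainType) (s : seq D) (i : nat) : nat :=
  linear_complexity (take i s).

Lemma LC_spec (D : idomainType) (t : seq D) :
  exists f : {poly D}, [/\ f != 0, (size f).-1 = linear_complexity t & annihilates f t].
Proof.
rewrite /linear_complexity; case: ex_minnP => m hm _.
move: hm; rewrite /has_annihilator_of_deg; case: excluded_middle_informative => //.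
Qed.

Lemma LC_min (D : idomainType) (t : seq D) (f : {poly D}) :
  f != 0 -> annihilates f t -> (linear_complexity t <= (size f).-1)%N.
Proof.
move=> h1 h2; rewrite /linear_complexity; case: ex_minnP => m _ hmin.
apply: hmin; rewrite /has_annihilator_of_deg; case: excluded_middle_informative => //.
by case; exists f.
Qed.

Lemma LC_size (D : idomainType) (t : seq D) : (linear_complexity t <= size t)%N.
Proof.
have -> : size t = (size ('X^(size t) : {poly D})).-1 by rewrite size_polyXn.
apply: LC_min; first by rewrite monic_neq0 // monicXn.
right=> j; rewrite size_polyXn /= addn1 => /andP [h1 h2].
by have := leq_trans h1 h2; rewrite ltnn.
Qed.

Lemma LC0 (D : idomainType) (s : seq D) : LC s 0 = 0%N.
Proof.
apply/eqP; rewrite -leqn0 /LC take0.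
have := LC_size (Nil D); by [].
Qed.

Lemma sizef (D : idomainType) (f : {poly D}) : f != 0 -> size f = (size f).-1.+1.
Proof. by move=> h; rewrite prednK // size_poly_gt0. Qed.

Lemma annih_take (D : idomainType) (s : seq D) (f : {poly D}) (i : nat) :
  f != 0 -> (i <= size s)%N ->
  (annihilates f (take i s) <->
   (forall j, ((size f).-1 < j <= i)%N -> Ew s f (size f) (j - (size f).-1) = 0)).
Proof.
move=> fn0 hi; rewrite /annihilates size_takel //.
have key : forall j, ((size f).-1 < j <= i)%N ->
  \sum_(k < size f) f`_k * sterm (take i s) (j - (size f).-1 + k) = Ew s f (size f) (j - (size f).-1).
  move=> j /andP [h1 h2]; apply: eq_bigr => k _; congr (_ * _).
  rewrite /sterm nth_take //.
  have hk : (k <= (size f).-1)%N by rewrite -ltnS -sizef.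
  move: (nat_of_ord k) hk h1 => kk; move: (size f).-1 => d hk h1; slia.
split.
- case=> [/eqP f0|h j hj]; first by rewrite f0 in fn0.
  rewrite -key //; apply: h; rewrite addn1; exact: hj.
- move=> h; right=> j; rewrite addn1 => hj; rewrite key //; exact: h.
Qed.

Lemma Ew_shift (D : idomainType) (s : seq D) (p : {poly D}) (c N r : nat) :
  Ew s (p * 'X^c) (c + N) r = Ew s p N (r + c).
Proof.
rewrite /Ew big_split_ord /= big1 ?add0r; last first.
  by move=> k _; rewrite coefMXn /= ltn_ord mul0r.
apply: eq_bigr => k _; rewrite coefMXn /= ltnNge leq_addr /= addKn.
by rewrite addnA.
Qed.

Lemma Ew_widen (D : idomainType) (s : seq D) (p : {poly D}) (N r : nat) :
  (size p <= N)%N -> Ew s p N r = Ew s p (size p) r.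
Proof.
move=> h; rewrite /Ew -(subnKC h) big_split_ord /= [X in _ + X]big1 ?addr0 //.
by move=> k _; rewrite nth_default ?mul0r // leq_addr.
Qed.

Lemma Ew_lin (D : idomainType) (s : seq D) (p q : {poly D}) (a b : D) (N r : nat) :
  Ew s (a *: p - b *: q) N r = a * Ew s p N r - b * Ew s q N r.
Proof.
rewrite /Ew !mulr_sumr -sumrB; apply: eq_bigr => k _.
by rewrite coefB !coefZ mulrBl !mulrA.
Qed.

Lemma LC_mono (D : idomainType) (s : seq D) (i : nat) :
  (i < size s)%N -> (LC s i <= LC s i.+1)%N.
Proof.
move=> hi; have [f [fn0 hd ha]] := LC_spec (take i.+1 s).
rewrite /LC -hd; apply: LC_min => //.
apply/(annih_take fn0 (ltnW hi)) => j /andP [h1 h2].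
by move/(@annih_take _ _ _ i.+1 fn0 hi): ha; apply; rewrite h1 ltnW.
Qed.

Lemma LC_le (D : idomainType) (s : seq D) (i : nat) :
  (i <= size s)%N -> (LC s i <= i)%N.
Proof. by move=> hi; have := LC_size (take i s); rewrite size_takel. Qed.

Lemma disc_nz (D : idomainType) (s : seq D) (i : nat) (f : {poly D}) :
  (i < size s)%N -> f != 0 -> annihilates f (take i s) -> (size f).-1 = LC s i ->
  (LC s i < LC s i.+1)%N -> Ew s f (size f) (i.+1 - (size f).-1) != 0.
Proof.
move=> hi fn0 ha hd hlt; apply/negP => /eqP h0.
suff : (LC s i.+1 <= (size f).-1)%N by rewrite hd leqNgt hlt.
apply: LC_min => //; apply/(@annih_take _ _ _ i.+1 fn0 hi) => j /andP [h1 h2].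
move: h2; rewrite leq_eqVlt => /orP [/eqP -> //| h2].
by move/(annih_take fn0 (ltnW hi)): ha; apply; rewrite h1.
Qed.

Lemma find_jump (g : nat -> nat) (i : nat) :
  (forall k, (k < i)%N -> (g k <= g k.+1)%N) -> (g 0 < g i)%N ->
  exists m, [/\ (m < i)%N, (g m < g m.+1)%N & g m.+1 = g i].
Proof.
elim: i => [|i IH] hm h0; first by rewrite ltnn in h0.
case: (ltnP (g i) (g i.+1)) => h; first by exists i.
have e : g i = g i.+1 by apply/eqP; rewrite eqn_leq h hm.
have hm' : forall k, (k < i)%N -> (g k <= g k.+1)%N.
  by move=> k hk; apply: hm; rewrite ltnS ltnW.
have h0' : (g 0 < g i)%N by rewrite e.
have [m [h1 h2 h3]] := IH hm' h0'.
by exists m; split => //; [rewrite ltnS ltnW | rewrite h3].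
Qed.

Lemma main_step (D : idomainType) (s : seq D) (i : nat) :
  (i < size s)%N -> (LC s i < LC s i.+1)%N -> (LC s i.+1 <= i.+1 - LC s i)%N.
Proof.
elim/ltn_ind: i => i IH hi hlt.
have hai : (LC s i <= i)%N := LC_le (ltnW hi).
case: (posnP (LC s i)) => [a0 | apos].
  by rewrite a0 subn0; exact: LC_le hi.
have [m [hmi hm1 hm2]] : exists m, [/\ (m < i)%N, (LC s m < LC s m.+1)%N & LC s m.+1 = LC s i].
  apply: find_jump; last by rewrite LC0.
  by move=> k hk; apply: LC_mono; exact: ltn_trans hk hi.
have hms : (m < size s)%N by exact: ltn_trans hmi hi.
have IHm := IH m hmi hms hm1.
rewrite hm2 in IHm.
have [f [fn0 hfd hfa]] := LC_spec (take i s).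
have [g [gn0 hgd hga]] := LC_spec (take m s).
have dF := disc_nz hi fn0 hfa hfd hlt.
have dG := disc_nz hms gn0 hga hgd hm1.
rewrite hm2 in hm1.
have sf : size f = (LC s i).+1 by rewrite sizef // hfd.
have sg : size g = (LC s m).+1 by rewrite sizef // hgd.
have eF : forall j, (LC s i < j <= i)%N -> Ew s f (size f) (j - LC s i) = 0.
  by move=> j hj; move/(annih_take fn0 (ltnW hi)): hfa; rewrite sf /=; apply.
have eG : forall j, (LC s m < j <= m)%N -> Ew s g (size g) (j - LC s m) = 0.
  by move=> j hj; move/(annih_take gn0 (ltnW hms)): hga; rewrite sg /=; apply.
set df := Ew s f (size f) (i.+1 - (size f).-1).
set dg := Ew s g (size g) (m.+1 - (size g).-1).
have [Dd [hD1 hD2 hD3]] : exists Dd, [/\ (LC s i <= Dd)%N, (LC s m + (i - m) <= Dd)%N &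
     Dd = LC s i \/ Dd = (LC s m + (i - m))%N].
  exists (maxn (LC s i) (LC s m + (i - m))); split; [exact: leq_maxl | exact: leq_maxr |].
  by rewrite /maxn; case: ltnP; [right | left].
pose h := dg *: (f * 'X^(Dd - LC s i)) - df *: (g * 'X^(Dd - LC s m - (i - m))).
have sh : size h = Dd.+1.
  rewrite /h size_polyDl.
    rewrite size_scale // size_mulXn // sf; slia.
  rewrite size_polyN !size_scale // !size_mulXn // sf sg; slia.
have hn0 : h != 0 by rewrite -size_poly_gt0 sh.
have hann : annihilates h (take i.+1 s).
  apply/(@annih_take _ _ _ i.+1 hn0 hi); rewrite sh /= => j /andP [j1 j2].
  rewrite /h Ew_lin (@Ew_widen _ s (g * _)); last by rewrite size_mulXn // sg; slia.
  rewrite size_mulXn // Ew_shift.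
  have -> : Dd.+1 = (Dd - LC s i + size f)%N by rewrite sf; slia.
  rewrite Ew_shift.
  have -> : (j - Dd + (Dd - LC s i) = j - LC s i)%N by slia.
  have -> : (j - Dd + (Dd - LC s m - (i - m)) = (j - (i - m)) - LC s m)%N by slia.
  move: j2; rewrite leq_eqVlt => /orP [/eqP ej | j2].
    have -> : (j - (i - m) = m.+1)%N by slia.
    rewrite ej.
    have -> : LC s i = (size f).-1 by rewrite sf.
    have -> : LC s m = (size g).-1 by rewrite sg.
    by rewrite -/df -/dg mulrC subrr.
  rewrite eF; last by apply/andP; split; slia.
  rewrite eG; last by apply/andP; split; slia.
  by rewrite !mulr0 subrr.
have := LC_min hn0 hann; rewrite sh /= => hc.
case: hD3 => eD; rewrite eD in hc.
  by move: hlt; rewrite /LC ltnNge hc.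
by move: hc; rewrite /LC => hc; slia.
Qed.

Lemma ZA (S L L' q : Z) : (0 <= q)%Z -> (S >= (L-q)*(L-q-1))%Z -> (L <= L')%Z ->
  ((L < L')%Z -> (L' <= 2*q+1-L)%Z) -> (S + (q+1) - L' >= (L'-q-1)*(L'-q-1))%Z.
Proof.
move=> hq hS hL hj; case: (Z.eq_dec L L') => [<-|ne]; first nia.
have h1 : (L < L')%Z by lia.
have h2 := hj h1.
have : (0 <= (L'-L)*(2*q+1-L-L'))%Z by apply: Z.mul_nonneg_nonneg; lia.
nia.
Qed.

Lemma ZB (S L L' q : Z) : (0 <= q)%Z -> (S >= (L-q-1)*(L-q-1))%Z -> (L <= L')%Z ->
  ((L < L')%Z -> (L' <= 2*q+2-L)%Z) -> (S + (q+1) - L' >= (L'-q-1)*(L'-q-2))%Z.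
Proof.
move=> hq hS hL hj; case: (Z.eq_dec L L') => [<-|ne]; first nia.
have h1 : (L < L')%Z by lia.
have h2 := hj h1.
have : (0 <= (L'-L)*(2*q+2-L-L'))%Z by apply: Z.mul_nonneg_nonneg; lia.
nia.
Qed.

Fixpoint sgf (g : nat -> nat) (n : nat) : nat :=
  match n with 0 => 0%N | k.+1 => (sgf g k + g k.+1)%N end.

Lemma big_sgf (g : nat -> nat) n : (\sum_(1 <= i < n.+1) g i)%N = sgf g n.
Proof.
elim: n => [|n IH]; first by rewrite big_geq.
by rewrite big_nat_recr //= IH.
Qed.

Lemma half2 q : ((2*q).+2)./2 = q.+1 /\ ((2*q).+3)./2 = q.+1.
Proof.
rewrite mul2n -doubleS; split; first by rewrite doubleK.
by rewrite /= uphalf_double.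
Qed.

Local Close Scope ring_scope.

Lemma comb (g : nat -> nat) (n : nat) : g 0 = 0%N ->
  (forall k, (k < n)%N -> (g k <= g k.+1)%N) ->
  (forall k, (k < n)%N -> (g k < g k.+1)%N -> (g k.+1 <= k.+1 - g k)%N) ->
  (sgf g n <= sgf (fun i => i.+1./2) n)%N.
Proof.
move=> h0 hm hj.
pose c := fun i : nat => i.+1./2.
pose Sz k := (Z.of_nat (sgf c k) - Z.of_nat (sgf g k))%Z.
have stepA : forall q, (2 * q < n)%N ->
   (Sz (2*q)%N >= (Z.of_nat (g (2*q)%N) - Z.of_nat q) * (Z.of_nat (g (2*q)%N) - Z.of_nat q - 1))%Z ->
   (Sz (2*q).+1 >= (Z.of_nat (g (2*q).+1) - Z.of_nat q - 1) * (Z.of_nat (g (2*q).+1) - Z.of_nat q - 1))%Z.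
  move=> q hq hS.
  have e : Sz (2*q).+1 = (Sz (2*q)%N + (Z.of_nat q + 1) - Z.of_nat (g (2*q).+1))%Z.
    have hh : ((2*q)./2 = q)%N by rewrite mul2n doubleK.
    rewrite /Sz /= /c hh.
    move: (sgf _ (2*q)) (sgf g (2*q)) (g (2*q).+1) => x y z; slia.
  rewrite e; apply: (@ZA (Sz (2*q)%N) (Z.of_nat (g (2*q)%N)) (Z.of_nat (g (2*q).+1)) (Z.of_nat q)) => //; first lia.
    have H := hm _ hq; clear -H; slia.
  move=> hl; have hl' : (g (2*q)%N < g (2*q).+1)%N by apply/ltP; lia.
  have H := hj _ hq hl'; clear -H hl'; slia.
have stepB : forall q, ((2 * q).+1 < n)%N ->
   (Sz (2*q).+1 >= (Z.of_nat (g (2*q).+1) - Z.of_nat q - 1) * (Z.of_nat (g (2*q).+1) - Z.of_nat q - 1))%Z ->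
   (Sz (2*q.+1)%N >= (Z.of_nat (g (2*q.+1)%N) - Z.of_nat q.+1) * (Z.of_nat (g (2*q.+1)%N) - Z.of_nat q.+1 - 1))%Z.
  move=> q hq hS.
  have e2 : (2 * q.+1 = (2*q).+2)%N by rewrite mulnS.
  rewrite e2.
  have e : Sz (2*q).+2 = (Sz (2*q).+1 + (Z.of_nat q + 1) - Z.of_nat (g (2*q).+2))%Z.
    have hh : ((2*q)./2 = q)%N by rewrite mul2n doubleK.
    have hu : (uphalf (2*q) = q)%N by rewrite mul2n uphalf_double.
    rewrite /Sz /= /c hh hu.
    move: (sgf _ (2*q)) (sgf g (2*q)) (g (2*q).+1) (g (2*q).+2) => x y z w; slia.
  rewrite e.
  have := @ZB (Sz (2*q).+1) (Z.of_nat (g (2*q).+1)) (Z.of_nat (g (2*q).+2)) (Z.of_nat q).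
  move=> hZ.
  have -> : (Z.of_nat (g (2 * q).+2) - Z.of_nat q.+1 = Z.of_nat (g (2 * q).+2) - Z.of_nat q - 1)%Z by lia.
  have -> : (Z.of_nat (g (2 * q).+2) - Z.of_nat q - 1 - 1 = Z.of_nat (g (2 * q).+2) - Z.of_nat q - 2)%Z by lia.
  apply: hZ => //; first lia.
    have H := hm _ hq; clear -H; slia.
  move=> hl; have hl' : (g (2*q).+1 < g (2*q).+2)%N by apply/ltP; lia.
  have H := hj _ hq hl'; clear -H hl'; slia.
have P1 : forall q, (2 * q <= n)%N ->
   (Sz (2*q)%N >= (Z.of_nat (g (2*q)%N) - Z.of_nat q) * (Z.of_nat (g (2*q)%N) - Z.of_nat q - 1))%Z.
  elim=> [|q IH] hq.
    rewrite /Sz /= h0; lia.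
  have hq' : ((2 * q).+1 < n)%N by move: hq; rewrite mulnS.
  apply: stepB => //; apply: stepA; first exact: ltnW.
  apply: IH; rewrite ltnW // ltnW //.
suff : (0 <= Sz n)%Z by rewrite /Sz /c => hS; clear -hS; slia.
have Zxx : forall x : Z, (0 <= x*(x-1))%Z.
  move=> x; case: (Z.le_gt_cases 1 x) => hx; nia.
have [q [En|En]] : exists q, n = (2 * q)%N \/ n = (2 * q).+1.
  exists n./2; rewrite mul2n; case/boolP: (odd n) => ho.
    by right; rewrite -[LHS]odd_double_half ho.
  by left; rewrite -[LHS]odd_double_half (negbTE ho).
  have hq : 2 * q <= n by rewrite En.
  have := P1 q hq; have := Zxx (Z.of_nat (g (2*q)%N) - Z.of_nat q)%Z; rewrite En; lia.
have hq1 : 2 * q < n by rewrite En.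
have hq2 : 2 * q <= n by rewrite ltnW.
have := stepA q hq1 (P1 q hq2); have := Z.square_nonneg (Z.of_nat (g (2*q).+1) - Z.of_nat q - 1)%Z; rewrite En; lia.
Qed.

Theorem mainTheorem11 (D : idomainType) (n : nat) (s : seq D) :
  (1 <= n)%N -> size s = n ->
  (\sum_(1 <= i < n.+1) linear_complexity (take i s) <=
   \sum_(1 <= i < n.+1) i.+1./2)%N.
Proof.
move=> _ hs.
rewrite (big_sgf (fun i => linear_complexity (take i s))) big_sgf.
apply: comb => [|k hk|k hk hlt].
- exact: (LC0 s).
- by apply: (LC_mono (s := s)); rewrite hs.
- by apply: (main_step (s := s)) => //; rewrite hs.
Qed.
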